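(* Every quotient of a finite weakly-top group is weakly-top. Every quotient of a finite top group is top.
   Context: For a group $H$, $H'$ denotes its commutator subgroup. A finite group $G$ is weakly-top if $|H/H'| \leq |G/G'|$ for every proper subgroup $H<G$, and top if $|H/H'| < |G/G'|$ for every proper subgroup $H<G$. *)

(* Defs.v *)
From mathcomp Require Import all_boot all_fingroup all_solvable.
Set Implicit Arguments. Unset Strict Implicit. Unset Printing Implicit Defensive.
Local Open Scope group_scope.

Definition weakly_top (gT : finGroupType) (G : {set gT}) : Prop :=
  forall H : {group gT}, H \proper G -> #|H / H^`(1)| <= #|G / G^`(1)|.

Definition top (gT : finGroupType) (G : {set gT}) : Prop :=
  forall H : {group gT}, H \proper G -> #|H / H^`(1)| < #|G / G^`(1)|.

(* Main.v *)
Require Import Defs.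
From mathcomp Require Import all_boot all_fingroup all_solvable.
Local Open Scope group_scope.

Lemma key (gT : finGroupType) (N H : {group gT}) : N \subset H -> H \subset 'N(N) ->
  #|H / H^`(1)| = (#|N : N :&: H^`(1)| * #|(H / N) / (H / N)^`(1)|)%N.
Proof.
move=> sNH nNH.
have nH' : H \subset 'N(H^`(1)) := normal_norm (der_normal 1 H).
set X := (H / N)%G.
have nX : X \subset 'N(X^`(1)) := normal_norm (der_normal 1 X).
rewrite (card_quotient nH') (card_quotient nX).
have eX' : X^`(1) = (H^`(1) / N)%G.
  by apply/val_inj => /=; rewrite quotient_der.
have sH'N : H^`(1) \subset 'N(N) := subset_trans (der_sub 1 H) nNH.
have hX : #|X| = #|H : N| by rewrite /= card_quotient.
have hX' : #|X^`(1)| = #|H^`(1) : H^`(1) :&: N| by rewrite eX' /= card_quotient // indexgI.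
have L1 := Lagrange (der_sub 1 H).
have L2 := Lagrange sNH.
have L3 := Lagrange (subsetIl N H^`(1)).
have L4 : (#|N :&: H^`(1)| * #|H^`(1) : N :&: H^`(1)|)%N = #|H^`(1)|.
  by rewrite setIC; apply: Lagrange; apply: subsetIl.
have L5 := Lagrange (der_sub 1 X).
set a := #|N :&: H^`(1)| in L3 L4.
set b := #|N : N :&: H^`(1)| in L3 *.
rewrite setIC in hX'.
set c := #|H^`(1) : N :&: H^`(1)| in L4 hX'.
set d := #|X : X^`(1)| in L5 *.
have ha : 0 < a by apply: cardG_gt0.
have hc : 0 < c by rewrite -hX'; apply: cardG_gt0.
have : (a * c * #|H : H^`(1)| = a * c * (b * d))%N.
  rewrite {1}L4 L1 -L2 -L3 -hX -L5 hX'.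
  by rewrite -!mulnA (mulnCA b).
by move/eqP; rewrite eqn_mul2l muln_eq0 !eqn0Ngt ha hc /= => /eqP.
Qed.

Arguments key {gT N H}.

Theorem lemma2p2 (gT : finGroupType) (G N : {group gT}) :
  N <| G ->
  (weakly_top G -> weakly_top (G / N)) /\ (top G -> top (G / N)).
Proof.
move=> nsNG.
have [sNG nNG] := andP nsNG.
have gen : forall K : {group coset_of N}, K \proper G / N ->
   exists H : {group gT}, [/\ H \proper G, N \subset H, H \subset 'N(N),
     H / N = K :> {set coset_of N} & H^`(1) \subset G^`(1)].
  move=> K pK.
  exists (coset N @*^-1 K)%G.
  have pH : coset N @*^-1 K \proper G.
    rewrite -(quotientGK nsNG) morphpre_proper //.
      by apply: subset_trans (proper_sub pK) _; rewrite morphimS.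
    by rewrite morphimS.
  split=> //.
  - exact: sub_cosetpre.
  - by rewrite /morphpre subsetIl.
  - by rewrite cosetpreK.
  - by apply: dergS; apply: proper_sub.
split=> Ht K pK; have [H [pH sNH nNH eK sHG]] := gen K pK;
  have := Ht H pH; rewrite (key sNH nNH) (key sNG nNG) eK;
  (have hb : #|N : N :&: G^`(1)| %| #|N : N :&: H^`(1)|
    by apply: indexgS; apply: setIS);
  (have hp : 0 < #|N : N :&: H^`(1)| by apply: indexg_gt0);
  move: hp; have [k ->] := dvdnP hb; move=> hp;
  (have bp : 0 < #|N : N :&: G^`(1)| by apply: indexg_gt0);
  set b := #|N : N :&: G^`(1)| in bp *;
  set x := #|K / K^`(1)|; set y := #|(G / N) / (G / N)^`(1)|;
  (have kp : 0 < k by move: hp; rewrite muln_gt0 => /andP[]);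
  move=> h.
- rewrite -mulnA in h; have := leq_trans (leq_pmull (b * x) kp) h.
  by rewrite leq_pmul2l.
- rewrite -mulnA in h; have := leq_ltn_trans (leq_pmull (b * x) kp) h.
  by rewrite ltn_pmul2l.
Qed.
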